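(* Let $\mathcal{C}$ be a deflation-exact category and $\mathcal{A}$ an admissibly deflation-percolating subcategory. Let $f\colon X\to Y$ be an admissible morphism whose kernel and cokernel lie in $\mathcal{A}$, and let $g\colon X\to A$ be any morphism with $A\in\mathcal{A}$. Then the pushout of $f$ along $g$ exists, and the induced morphism $A\to P$ (where $P$ is the pushout) is admissible with kernel and cokernel in $\mathcal{A}$.
   Context: A conflation category is an additive category with a class of kernel-cokernel pairs (closed under isomorphisms) called conflations; first map an inflation, second a deflation. A deflation-exact category is a conflation category satisfying: (R0) $1_0$ is a deflation; (R1) composites of deflations are deflations; (R2) pullbacks of deflations along arbitrary morphisms exist and are deflations. A morphism is admissible if it factors as a deflation followed by an inflation. A non-empty full subcategory $\mathcal{A}$ is admissibly deflation-percolating if: (A1) for every conflation $A'\rightarrowtail A\twoheadrightarrow A''$, $A\in\mathcal{A}$ iff $A',A''\in\mathcal{A}$; (A2) every morphism $C\to A$ with $A\in\mathcal{A}$ factors as a deflation $C\twoheadrightarrow A'$ followed by an inflation $A'\rightarrowtail A$ with $A'\in\mathcal{A}$; (A3) if $a\colon C\rightarrowtail D$ is an inflation and $b\colon C\twoheadrightarrow A$ a deflation with $A\in\mathcal{A}$, the pushout of $a$ along $b$ exists and yields a deflation $D\twoheadrightarrow P$ and an inflation $A\rightarrowtail P$. *)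

(* Defs.v *)
From HB Require Import structures.
From mathcomp Require Import all_boot all_algebra.
Set Implicit Arguments. Unset Strict Implicit. Unset Printing Implicit Defensive.
Import GRing.Theory.
Local Open Scope ring_scope.

Record AddCat := {
  ob :> Type;
  mor : ob -> ob -> zmodType;
  idm : forall X, mor X X;
  mcomp : forall X Y Z, mor Y Z -> mor X Y -> mor X Z;   (* mcomp g f = g o f *)
  compA : forall X Y Z W (h : mor Z W) (g : mor Y Z) (f : mor X Y),
      mcomp h (mcomp g f) = mcomp (mcomp h g) f;
  comp1m : forall X Y (f : mor X Y), mcomp (idm Y) f = f;
  compm1 : forall X Y (f : mor X Y), mcomp f (idm X) = f;
  compDl : forall X Y Z (g1 g2 : mor Y Z) (f : mor X Y),
      mcomp (g1 + g2) f = mcomp g1 f + mcomp g2 f;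
  compDr : forall X Y Z (g : mor Y Z) (f1 f2 : mor X Y),
      mcomp g (f1 + f2) = mcomp g f1 + mcomp g f2;
  zero_obj_ex : exists Z : ob, idm Z = 0;
  biprod_ex : forall X Y : ob, exists (W : ob) (i1 : mor X W) (i2 : mor Y W)
      (p1 : mor W X) (p2 : mor W Y),
      [/\ mcomp p1 i1 = idm X, mcomp p2 i2 = idm Y &
          mcomp i1 p1 + mcomp i2 p2 = idm W]
}.
Arguments mor {C} : rename.
Arguments idm {C} : rename.
Arguments mcomp {C X Y Z} : rename.

Section Notions.
Variable C : AddCat.

Definition is_zero_obj (Z : C) : Prop := idm Z = 0.

Definition is_kernel (X Y K : C) (f : mor X Y) (k : mor K X) : Prop :=
  mcomp f k = 0 /\
  forall (T : C) (t : mor T X), mcomp f t = 0 ->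
    exists u : mor T K, mcomp k u = t /\ forall u' : mor T K, mcomp k u' = t -> u' = u.

Definition is_cokernel (X Y Q : C) (f : mor X Y) (c : mor Y Q) : Prop :=
  mcomp c f = 0 /\
  forall (T : C) (t : mor Y T), mcomp t f = 0 ->
    exists u : mor Q T, mcomp u c = t /\ forall u' : mor Q T, mcomp u' c = t -> u' = u.

Definition kernel_cokernel_pair (A B D : C) (i : mor A B) (p : mor B D) : Prop :=
  is_kernel p i /\ is_cokernel i p.

Definition is_iso (X Y : C) (f : mor X Y) : Prop :=
  exists g : mor Y X, mcomp g f = idm X /\ mcomp f g = idm Y.

(* commutative square  B' --f'--> B ; B' --p'--> C' ; B --p--> D ; C' --f--> D
   is a pullback of p along f *)
Definition is_pullback (B D C' B' : C) (p : mor B D) (f : mor C' D)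
    (f' : mor B' B) (p' : mor B' C') : Prop :=
  mcomp p f' = mcomp f p' /\
  forall (T : C) (x : mor T B) (y : mor T C'), mcomp p x = mcomp f y ->
    exists u : mor T B', (mcomp f' u = x /\ mcomp p' u = y) /\
      forall u' : mor T B', mcomp f' u' = x /\ mcomp p' u' = y -> u' = u.

Definition is_pushout (X Y A P : C) (a : mor X Y) (b : mor X A)
    (b' : mor Y P) (a' : mor A P) : Prop :=
  mcomp b' a = mcomp a' b /\
  forall (T : C) (x : mor Y T) (y : mor A T), mcomp x a = mcomp y b ->
    exists u : mor P T, (mcomp u b' = x /\ mcomp u a' = y) /\
      forall u' : mor P T, mcomp u' b' = x /\ mcomp u' a' = y -> u' = u.

End Notions.

Record ConfCat := {
  cat :> AddCat;
  conf : forall A B D : cat, mor A B -> mor B D -> Prop;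
  conf_kc : forall (A B D : cat) (i : mor A B) (p : mor B D),
      conf i p -> kernel_cokernel_pair i p;
  conf_iso : forall (A B D A' B' D' : cat) (i : mor A B) (p : mor B D)
      (i' : mor A' B') (p' : mor B' D') (a : mor A A') (b : mor B B') (d : mor D D'),
      conf i p -> is_iso a -> is_iso b -> is_iso d ->
      mcomp b i = mcomp i' a -> mcomp d p = mcomp p' b -> conf i' p'
}.
Arguments conf {c A B D} : rename.

Section Exact.
Variable C : ConfCat.

Definition inflation (A B : C) (i : mor A B) : Prop :=
  exists (D : C) (p : mor B D), conf i p.
Definition deflation (B D : C) (p : mor B D) : Prop :=
  exists (A : C) (i : mor A B), conf i p.

Definition deflation_exact : Prop :=
  (forall Z : C, is_zero_obj Z -> deflation (idm Z)) /\
  (forall (X Y Z : C) (p : mor X Y) (q : mor Y Z),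
              deflation p -> deflation q -> deflation (mcomp q p)) /\
  (forall (B D C' : C) (p : mor B D) (f : mor C' D), deflation p ->
              exists (B' : C) (f' : mor B' B) (p' : mor B' C'),
                is_pullback p f f' p' /\ deflation p').

Definition admissible (X Y : C) (f : mor X Y) : Prop :=
  exists (I : C) (d : mor X I) (i : mor I Y), deflation d /\ inflation i /\ f = mcomp i d.

Definition adm_defl_percolating (inA : C -> Prop) : Prop :=
  (exists A : C, inA A) /\
  (forall (A' A A'' : C) (i : mor A' A) (p : mor A A''), conf i p ->
              (inA A <-> inA A' /\ inA A'')) /\
  (forall (D A : C) (h : mor D A), inA A ->
              exists (A' : C) (d : mor D A') (i : mor A' A),
                [/\ deflation d, inflation i, inA A' & h = mcomp i d]) /\
  (forall (D E A : C) (a : mor D E) (b : mor D A),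
              inflation a -> deflation b -> inA A ->
              exists (P : C) (b' : mor E P) (a' : mor A P),
                [/\ is_pushout a b b' a', deflation b' & inflation a']).

Definition ker_coker_in (inA : C -> Prop) (X Y : C) (f : mor X Y) : Prop :=
  (exists (K : C) (k : mor K X), is_kernel f k /\ inA K) /\
  (exists (Q : C) (c : mor Y Q), is_cokernel f c /\ inA Q).

End Exact.

(* Main.v *)
Require Import Defs.
From mathcomp Require Import all_boot all_algebra.
Set Implicit Arguments. Unset Strict Implicit. Unset Printing Implicit Defensive.
Import GRing.Theory.
Local Open Scope ring_scope.

Section Alg.
Variable C : AddCat.
Local Notation "g ⊙ f" := (mcomp g f) (at level 40, left associativity).

Lemma mcA (X Y Z W : C) (h : mor Z W) (g : mor Y Z) (f : mor X Y) :
  h ⊙ (g ⊙ f) = (h ⊙ g) ⊙ f.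
Proof. exact: Defs.compA. Qed.

Lemma comp0m (X Y Z : C) (f : mor X Y) : (0 : mor Y Z) ⊙ f = 0.
Proof.
have H := compDl (0 : mor Y Z) 0 f; rewrite addr0 in H.
by apply: (addrI (0 ⊙ f)); rewrite addr0 -H.
Qed.

Lemma compm0 (X Y Z : C) (g : mor Y Z) : g ⊙ (0 : mor X Y) = 0.
Proof.
have H := compDr g (0 : mor X Y) 0; rewrite addr0 in H.
by apply: (addrI (g ⊙ 0)); rewrite addr0 -H.
Qed.

Lemma compNl (X Y Z : C) (g : mor Y Z) (f : mor X Y) : (- g) ⊙ f = - (g ⊙ f).
Proof.
apply: (addrI (g ⊙ f)); rewrite -compDl !subrr; exact: comp0m.
Qed.

Lemma compNr (X Y Z : C) (g : mor Y Z) (f : mor X Y) : g ⊙ (- f) = - (g ⊙ f).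
Proof.
apply: (addrI (g ⊙ f)); rewrite -compDr !subrr; exact: compm0.
Qed.

Lemma compBl (X Y Z : C) (g1 g2 : mor Y Z) (f : mor X Y) : (g1 - g2) ⊙ f = g1 ⊙ f - g2 ⊙ f.
Proof. by rewrite compDl compNl. Qed.

Lemma compBr (X Y Z : C) (g : mor Y Z) (f1 f2 : mor X Y) : g ⊙ (f1 - f2) = g ⊙ f1 - g ⊙ f2.
Proof. by rewrite compDr compNr. Qed.

Lemma zero_to (Z X : C) (m : mor X Z) : is_zero_obj Z -> m = 0.
Proof. by move=> hZ; rewrite -(comp1m m) hZ comp0m. Qed.

Lemma zero_from (Z X : C) (m : mor Z X) : is_zero_obj Z -> m = 0.
Proof. by move=> hZ; rewrite -(compm1 m) hZ compm0. Qed.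

Lemma biprod_orth (X Y W : C) (i1 : mor X W) (i2 : mor Y W) (p1 : mor W X) (p2 : mor W Y) :
  p1 ⊙ i1 = idm X -> p2 ⊙ i2 = idm Y -> i1 ⊙ p1 + i2 ⊙ p2 = idm W ->
  p1 ⊙ i2 = 0 /\ p2 ⊙ i1 = 0.
Proof.
move=> h1 h2 h3; split.
- have H : p1 ⊙ i2 = p1 ⊙ (i1 ⊙ p1 + i2 ⊙ p2) ⊙ i2 by rewrite h3 compm1.
  rewrite compDr compDl -!mcA h2 compm1 mcA h1 comp1m in H.
  by apply: (addrI (p1 ⊙ i2)); rewrite addr0 -H.
- have H : p2 ⊙ i1 = p2 ⊙ (i1 ⊙ p1 + i2 ⊙ p2) ⊙ i1 by rewrite h3 compm1.
  rewrite compDr compDl -!mcA h1 compm1 mcA h2 comp1m in H.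
  by apply: (addrI (p2 ⊙ i1)); rewrite addr0 [RHS]H addrC.
Qed.

Lemma kernel_mono (X Y K T : C) (f : mor X Y) (k : mor K X) (u v : mor T K) :
  is_kernel f k -> k ⊙ u = k ⊙ v -> u = v.
Proof.
move=> [hk0 hk] e.
have [|w [_ hw]] := hk T (k ⊙ u); first by rewrite mcA hk0 comp0m.
by rewrite (hw u erefl) (hw v (esym e)).
Qed.

Lemma cokernel_epi (X Y Q T : C) (f : mor X Y) (c : mor Y Q) (u v : mor Q T) :
  is_cokernel f c -> u ⊙ c = v ⊙ c -> u = v.
Proof.
move=> [hc0 hc] e.
have [|w [_ hw]] := hc T (u ⊙ c); first by rewrite -mcA hc0 compm0.
by rewrite (hw u erefl) (hw v (esym e)).
Qed.

End Alg.

Section Alg2.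
Variable C : AddCat.
Local Notation "g ⊙ f" := (mcomp g f) (at level 40, left associativity).

Lemma mcAr (X Y Z W : C) (g : mor Y Z) (f : mor X Y) (k : mor X Z) :
  g ⊙ f = k -> forall x : mor W X, g ⊙ (f ⊙ x) = k ⊙ x.
Proof. by move=> h x; rewrite mcA h. Qed.

Lemma pushout_coker (X Y A P Q : C) (a : mor X Y) (b : mor X A) (b' : mor Y P) (a' : mor A P)
  (c : mor Y Q) : is_pushout a b b' a' -> is_cokernel a c ->
  exists c' : mor P Q, is_cokernel a' c'.
Proof.
move=> [hpo1 hpo] [hc0 hc].
have [|c' [[hc1 hc2] _]] := hpo Q c 0; first by rewrite hc0 comp0m.
exists c'; split => // T t ht.
have [|w [hw wq]] := hc T (t ⊙ b'); first by rewrite -mcA hpo1 mcA ht comp0m.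
have [|z [_ zq]] := hpo T (t ⊙ b') 0; first by rewrite -mcA hpo1 mcA ht !comp0m.
exists w; split.
- have -> : t = z by apply: zq.
  apply: zq; split.
  + by rewrite -mcA hc1.
  + by rewrite -mcA hc2 compm0.
- by move=> w' hw'; apply: wq; rewrite -hw' -mcA hc1.
Qed.

End Alg2.

Section Conf.
Variable C : ConfCat.
Local Notation "g ⊙ f" := (mcomp g f) (at level 40, left associativity).

Lemma iso_idm (X : C) : is_iso (idm X).
Proof. by exists (idm X); rewrite comp1m. Qed.

Lemma conf_ker (A B D K : C) (i : mor A B) (p : mor B D) (k : mor K B) :
  conf i p -> is_kernel p k -> conf k p.
Proof.
move=> H hk'; have [hk _] := conf_kc H.
have [|u [hu _]] := hk.2 K k; first exact: hk'.1.
have [|v [hv _]] := hk'.2 A i; first exact: hk.1.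
apply: (conf_iso (a := v) (b := idm B) (d := idm D) H).
- exists u; split.
  + apply: (kernel_mono hk); by rewrite mcA hu hv compm1.
  + apply: (kernel_mono hk'); by rewrite mcA hv hu compm1.
- exact: iso_idm.
- exact: iso_idm.
- by rewrite comp1m hv.
- by rewrite comp1m compm1.
Qed.

Lemma conf_coker (A B D Q : C) (i : mor A B) (p : mor B D) (c : mor B Q) :
  conf i p -> is_cokernel i c -> conf i c.
Proof.
move=> H hc'; have [_ hc] := conf_kc H.
have [|u [hu _]] := hc.2 Q c; first exact: hc'.1.
have [|v [hv _]] := hc'.2 D p; first exact: hc.1.
apply: (conf_iso (a := idm A) (b := idm B) (d := u) H).
- exact: iso_idm.
- exact: iso_idm.
- exists v; split.
  + apply: (cokernel_epi hc); by rewrite -mcA hu hv comp1m.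
  + apply: (cokernel_epi hc'); by rewrite -mcA hv hu comp1m.
- by rewrite comp1m compm1.
- by rewrite hu compm1.
Qed.

Lemma defl_iso (B D B' : C) (p : mor B D) (b : mor B' B) :
  deflation p -> is_iso b -> deflation (p ⊙ b).
Proof.
move=> [K [i H]] [b' [h1 h2]].
exists K, (b' ⊙ i).
apply: (conf_iso (a := idm K) (b := b') (d := idm D) H).
- exact: iso_idm.
- by exists b.
- exact: iso_idm.
- by rewrite compm1.
- by rewrite comp1m -mcA h2 compm1.
Qed.

Lemma infl_mono (A B T : C) (i : mor A B) (u v : mor T A) :
  inflation i -> i ⊙ u = i ⊙ v -> u = v.
Proof. move=> [D [p H]]; exact: (kernel_mono (conf_kc H).1). Qed.

Lemma defl_epi (B D T : C) (p : mor B D) (u v : mor D T) :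
  deflation p -> u ⊙ p = v ⊙ p -> u = v.
Proof. move=> [A [i H]]; exact: (cokernel_epi (conf_kc H).2). Qed.

End Conf.

Section Perc.
Variable C : ConfCat.
Local Notation "g ⊙ f" := (mcomp g f) (at level 40, left associativity).
Variable inA : C -> Prop.
Hypothesis HC : deflation_exact C.
Hypothesis HA : adm_defl_percolating inA.

Lemma defl_to_zero (X : C) : exists (Z : C) (t : mor X Z), is_zero_obj Z /\ deflation t.
Proof.
have [[A0 hA0] [_ [A2 _]]] := HA.
have [A' [d [i [hd hi _ e]]]] := A2 X A0 0 hA0.
have d0 : d = 0 by apply: (infl_mono hi); rewrite -e compm0.
subst d; exists A', 0; split => //.
by apply: (defl_epi hd); rewrite compm0 comp0m.
Qed.

Lemma proj2_defl (X Y W : C) (i1 : mor X W) (i2 : mor Y W) (p1 : mor W X) (p2 : mor W Y) :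
  p1 ⊙ i1 = idm X -> p2 ⊙ i2 = idm Y -> i1 ⊙ p1 + i2 ⊙ p2 = idm W ->
  deflation p2.
Proof.
move=> h1 h2 h3; have [o12 o21] := biprod_orth h1 h2 h3.
have [Z [t [hZ ht]]] := defl_to_zero X.
have [_ [_ R2]] := HC.
have [B' [f' [p' [hpb hp']]]] := R2 X Z Y t 0 ht.
have [|u [[hu1 hu2] _]] := hpb.2 W p1 p2; first by rewrite (zero_to (t ⊙ p1) hZ) (zero_to ((0 : mor Y Z) ⊙ p2) hZ).
rewrite -hu2; apply: defl_iso => //.
exists (i1 ⊙ f' + i2 ⊙ p'); split.
- by rewrite compDl -!mcA hu1 hu2.
- have [w [_ uq]] := hpb.2 B' f' p' hpb.1.
  rewrite (uq (idm B')); last by rewrite !compm1.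
  apply: uq; split; rewrite !mcA ?hu1 ?hu2 !compDr !mcA ?h1 ?h2 ?o12 ?o21 ?comp0m ?comp1m.
  - by rewrite addr0.
  - by rewrite add0r.
Qed.

Lemma proj1_defl (X Y W : C) (i1 : mor X W) (i2 : mor Y W) (p1 : mor W X) (p2 : mor W Y) :
  p1 ⊙ i1 = idm X -> p2 ⊙ i2 = idm Y -> i1 ⊙ p1 + i2 ⊙ p2 = idm W ->
  deflation p1.
Proof. by move=> h1 h2 h3; apply: (proj2_defl h2 h1); rewrite addrC. Qed.

End Perc.

Section Step2.
Variable C : ConfCat.
Local Notation "g ⊙ f" := (mcomp g f) (at level 40, left associativity).
Variable inA : C -> Prop.
Hypothesis HC : deflation_exact C.
Hypothesis HA : adm_defl_percolating inA.

Lemma pushout_infl (I Y R Q : C) (i : mor I Y) (g1 : mor I R) (c : mor Y Q) :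
  inflation i -> is_cokernel i c -> inA R ->
  exists (P : C) (b2 : mor Y P) (a2 : mor R P) (c' : mor P Q),
    [/\ is_pushout i g1 b2 a2, inflation a2 & is_cokernel a2 c'].
Proof.
move=> hi hc hR.
have [W1 [u1 [u2 [p1 [p2 [e1 e2 e3]]]]]] := biprod_ex I R.
have [W2 [v1 [v2 [s1 [s2 [f1 f2 f3]]]]]] := biprod_ex Y R.
have [o12 o21] := biprod_orth e1 e2 e3.
have [o12' o21'] := biprod_orth f1 f2 f3.
set a := v1 ⊙ i ⊙ p1 + v2 ⊙ (p2 - g1 ⊙ p1).
have au1 : a ⊙ u1 = v1 ⊙ i - v2 ⊙ g1.
  rewrite /a compDl compBr compBl -!mcA e1 o21 !compm1 compm0 add0r.
  by [].
have au2 : a ⊙ u2 = v2.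
  rewrite /a compDl compBr compBl -!mcA o12 e2 !compm0 compm1 subr0 add0r.
  by [].
have s1a : s1 ⊙ a = i ⊙ p1.
  by rewrite /a compDr !mcA f1 o12' comp0m addr0 comp1m.
have s2a : s2 ⊙ a = p2 - g1 ⊙ p1.
  by rewrite /a compDr !mcA f2 o21' !comp0m add0r comp1m.
have [R0 [R1 R2]] := HC.
have [D0 [q hiq]] := hi.
have hkq := (conf_kc hiq).1.
have hs1 : deflation s1 := proj1_defl HC HA f1 f2 f3.
have hqd : deflation q by exists I, i.
have hd := R1 _ _ _ s1 q hs1 hqd.
have hker : is_kernel (q ⊙ s1) a.
  split.
  - by rewrite -mcA s1a mcA hkq.1 comp0m.
  - move=> T t ht.
    have [|w [hw wq]] := hkq.2 T (s1 ⊙ t); first by rewrite mcA.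
    exists (u1 ⊙ w + u2 ⊙ (s2 ⊙ t + g1 ⊙ w)); split.
    + rewrite compDr !mcA au1 au2 compBl compDr -!mcA hw.
      rewrite -[RHS]comp1m -f3 compDl -!mcA.
      by rewrite addrACA addNr addr0.
    + move=> u' hu'.
      have hp1 : p1 ⊙ u' = w by apply: wq; rewrite -hu' (mcA s1) s1a mcA.
      have hp2 : p2 ⊙ u' = s2 ⊙ t + g1 ⊙ w.
        have := congr1 (mcomp s2) hu'; rewrite mcA s2a compBl -mcA hp1 => <-.
        by rewrite subrK.
      by rewrite -[u']comp1m -e3 compDl -!mcA hp1 hp2.
have hinfl : inflation a.
  have [K1 [k1 hconf]] := hd.
  by exists D0, (q ⊙ s1); apply: conf_ker hconf hker.
have [_ [_ [_ A3]]] := HA.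
have [P [b' [a' [hpo hb' ha']]]] := A3 _ _ _ a p2 hinfl (proj2_defl HC HA e1 e2 e3) hR.
have key1 : b' ⊙ v2 = a' by rewrite -au2 mcA hpo.1 -mcA e2 compm1.
have key2 : b' ⊙ v1 ⊙ i = a' ⊙ g1.
  have h := mcAr hpo.1 u1.
  rewrite au1 compBr -mcA o21 compm0 in h.
  by rewrite -key1 -!mcA; apply/eqP; rewrite -subr_eq0 h.
have hPO : is_pushout i g1 (b' ⊙ v1) a'.
  split; first exact: key2.
  move=> T x y hxy.
  have [|u [[hu1 hu2] uq]] := hpo.2 T (x ⊙ s1 + y ⊙ s2) y.
    rewrite compDl -!mcA s1a s2a compBr !mcA hxy.
    by rewrite addrC subrK.
  exists u; split.
  - split; last exact: hu2.
    by rewrite mcA hu1 compDl -!mcA f1 o21' compm1 compm0 addr0.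
  - move=> u' [h1 h2]; apply: uq; split => //.
    rewrite -[b'](compm1) -f3 !compDr !mcA -(mcA u' b' v2) key1 h2 -(mcA u' b' v1) h1.
    by [].
have [c' hc'] := pushout_coker hPO hc.
by exists P, (b' ⊙ v1), a', c'; split.
Qed.
End Step2.

Local Notation "g ⊙ f" := (mcomp g f) (at level 40, left associativity).

Theorem mainTheorem8 (C : ConfCat) (inA : C -> Prop)
  (HC : deflation_exact C) (HA : adm_defl_percolating inA)
  (X Y A : C) (f : mor X Y) (g : mor X A)
  (Hf : admissible f) (HfA : ker_coker_in inA f) (HAin : inA A) :
  exists (P : C) (g' : mor Y P) (f' : mor A P),
    [/\ is_pushout f g g' f', admissible f' & ker_coker_in inA f'].
Proof.
have [R0 [R1 R2]] := HC.
have [Ane [A1 [A2 A3]]] := HA.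
have [I [d [i [hd [hi ef]]]]] := Hf.
have [[K [k [hk hK]]] [Q [c [hc hQ]]]] := HfA.
have [K0 [k0 hkd]] := hd.
have [hk0 hcd] := conf_kc hkd.
have [A'' [e [j [he hj hA'' egk]]]] := A2 _ _ (g ⊙ k0) HAin.
have [R [r hjr]] := hj.
have hR : inA R := (proj1 (A1 _ _ _ _ _ hjr) HAin).2.
have [hjk hjc] := conf_kc hjr.
have hrd : deflation r by exists A'', j.
have [|g1 [hg1 _]] := hcd.2 R (r ⊙ g); first by rewrite -mcA egk mcA hjc.1 comp0m.
have hci : is_cokernel i c.
  split.
  - by apply: (defl_epi hd); rewrite comp0m -mcA -ef hc.1.
  - by move=> T t ht; apply: hc.2; rewrite ef mcA ht comp0m.
have [P [b2 [a2 [c' [hpo ha2 hc']]]]] := pushout_infl HC HA g1 hi hci hR.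
exists P, b2, (a2 ⊙ r); split.
- split.
  + by rewrite ef mcA hpo.1 -!mcA -hg1.
  + move=> T x y hxy.
    have yj : y ⊙ j = 0.
      apply: (defl_epi he); rewrite comp0m -mcA -egk mcA -hxy ef -!mcA hk0.1.
      by rewrite !compm0.
    have [y1 [hy1 _]] := hjc.2 T y yj.
    have hxi : x ⊙ i = y1 ⊙ g1.
      by apply: (defl_epi hd); rewrite -!mcA -ef hg1 (mcA y1) hy1 hxy.
    have [u [[hu1 hu2] uq]] := hpo.2 T x y1 hxi.
    exists u; split.
    * by split => //; rewrite mcA hu2 hy1.
    * move=> u' [h1 h2]; apply: uq; split => //.
      by apply: (defl_epi hrd); rewrite -mcA h2 hy1.
- by exists R, r, a2.
- split.
  + exists A'', j; split => //; split.
    * by rewrite -mcA hjc.1 compm0.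
    * move=> T t ht; apply: hjk.2; apply: (infl_mono ha2).
      by rewrite mcA ht compm0.
  + exists Q, c'; split => //; split.
    * by rewrite mcA hc'.1 comp0m.
    * move=> T t ht; apply: hc'.2; apply: (defl_epi hrd).
      by rewrite comp0m -mcA.
Qed.
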